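(* Let $H$ be a finite group of odd order with $d(H)=2$. Then $\mathsf{GEN}(\mathbb{Z}_2^2\times H)=*1$.
   Context: For a finite group $G$, $\mathsf{GEN}(G)$ is the following impartial two-player game. A position is a set of elements selected so far; the starting position is $\emptyset$. From a position $P$ with $\langle P\rangle\neq G$, the player to move selects some $g\in G\setminus P$, producing the position $P\cup\{g\}$ (these are the options of $P$); a position $P$ with $\langle P\rangle = G$ has no options. The nim-number of a position is defined recursively by $\operatorname{nim}(P)=\operatorname{mex}\{\operatorname{nim}(Q): Q \text{ an option of } P\}$, where $\operatorname{mex}(A)$ is the least nonnegative integer not in $A$. We write $\mathsf{GEN}(G)=*n$ if $\operatorname{nim}(\emptyset)=n$. $d(G)$ denotes the minimum size of a generating set of $G$; $\mathbb{Z}_2^2=\mathbb{Z}_2\times\mathbb{Z}_2$. *)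

(* Defs.v *)
From HB Require Import structures.
From mathcomp Require Import all_boot all_order all_algebra all_fingroup all_solvable.
Set Implicit Arguments. Unset Strict Implicit. Unset Printing Implicit Defensive.
Import GroupScope.

(* mex s = least natural number not occurring in s
   (it is always <= size s, so searching [0 .. size s] suffices). *)
Definition mex (s : seq nat) : nat :=
  find (fun n => n \notin s) (iota 0 (size s).+1).

Section Gen.
Variables (gT : finGroupType) (G : {group gT}).

Fixpoint gen_nim_fuel (n : nat) (P : {set gT}) : nat :=
  match n with
  | 0 => 0
  | n'.+1 =>
      if (<<P>> : {set gT}) == (G : {set gT}) then 0
      else mex [seq gen_nim_fuel n' (g |: P) | g in G :\: P]
  end.

(* Every play of GEN(G) has at most #|G| moves, so fuel #|G|.+1 computes
   the exact nim-number of the starting position (the empty set). *)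
Definition GEN_nim : nat := gen_nim_fuel #|G|.+1 set0.

Definition dgen : nat :=
  #|[arg min_(A < (G : {set gT}) | (A \subset G) && ((<<A>> : {set gT}) == G)) #|A|]|.
End Gen.

Definition Z2sq : {group ('Z_2 * 'Z_2)%type} := [set: ('Z_2 * 'Z_2)%type]%G.

(* Main.v *)
Require Import Defs.
From mathcomp Require Import all_boot all_order all_algebra all_fingroup all_solvable.
Import GroupScope.
Local Notation F := ('Z_2 * 'Z_2)%type.
Lemma sq0 (a : 'Z_2) : a ^+ 2 = 1.
Proof. case: a => [[|[|[]]]] // H. all: apply/val_inj => //. Qed.
Lemma sq1 (v : F) : v ^+ 2 = 1.
Proof. case: v => a b. change ((a^+2, b^+2) = (1,1)); by rewrite !sq0. Qed.
Lemma expX (aT bT : finGroupType) (x : (aT * bT)%type) n : x ^+ n = (x.1 ^+ n, x.2 ^+ n).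
Proof. elim: n => [|n IH]; first by []. by rewrite !expgS IH. Qed.
Lemma expF_odd (v : F) n : odd n -> v ^+ n = v.
Proof. move=> on; rewrite -[n]odd_double_half on expgD expg1 -muln2 mulnC expgM sq1 expg1n mulg1 //. Qed.
Lemma expF_even (v : F) n : ~~ odd n -> v ^+ n = 1.
Proof. move=> /negbTE on; rewrite -[n]odd_double_half on add0n -muln2 mulnC expgM sq1 expg1n //. Qed.

Lemma mex_trunc (s : seq nat) :
  minn (mex s) 2 = if 0%N \in s then (if 1%N \in s then 2%N else 1%N) else 0%N.
Proof.
rewrite /mex. case h0: (0 \in s); last by rewrite /= h0.
have: 0 < size s by case: s h0.
case: (size s) => // m _ /=. rewrite h0 /=.
by case: (1%N \in s).
Qed.

Section S.
Variable hT : finGroupType.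
Variable H : {group hT}.
Hypothesis oddH : odd #|H|.
Local Notation gT := (F * hT)%type.
Local Notation GG := (setX Z2sq H).
Definition p1 (P : {set gT}) : {set F} := [set x.1 | x in P].
Definition p2 (P : {set gT}) : {set hT} := [set x.2 | x in P].
Lemma genX (Q : {set gT}) : Q \subset GG -> <<Q>> = setX <<p1 Q>> <<p2 Q>>.
Proof.
move=> sQ; apply/eqP; rewrite eqEsubset; apply/andP; split.
  rewrite gen_subG. apply/subsetP => -[a b] Qx.
  by rewrite in_setX !mem_gen //; apply/imsetP; exists (a,b).
have xH x : x \in Q -> x.2 \in H by case: x => a b /(subsetP sQ); rewrite in_setX => /andP[].
rewrite -setX_prod mul_subG //.
  rewrite -morphim_pairg1 morphim_gen ?subsetT // gen_subG morphim_pairg1.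
  apply/subsetP => -[a b]; rewrite in_setX => /andP[/imsetP[x Qx ->] /set1P /= ->].
  have -> : (x.1, 1) = x ^+ #|H| by rewrite expX expF_odd // expg_cardG // xH.
  by rewrite groupX // mem_gen.
rewrite -morphim_pair1g morphim_gen ?subsetT // gen_subG morphim_pair1g.
apply/subsetP => -[a b]; rewrite in_setX => /andP[/set1P /= -> /imsetP[x Qx ->]].
have -> : (1, x.2) = x ^+ #|H|.+1 by rewrite expX expF_even ?expgS ?expg_cardG ?mulg1 ?xH //= oddH.
by rewrite groupX // mem_gen.
Qed.

Lemma cardF : #|[set: F]| = 4.
Proof. by rewrite cardsT card_prod card_ord. Qed.

Lemma p1U (g : gT) (P : {set gT}) : p1 (g |: P) = g.1 |: p1 P.
Proof. by rewrite /p1 imsetU1. Qed.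
Lemma p2U (g : gT) (P : {set gT}) : p2 (g |: P) = g.2 |: p2 P.
Proof. by rewrite /p2 imsetU1. Qed.

Lemma p2H (P : {set gT}) : P \subset GG -> p2 P \subset H.
Proof.
move=> sP; apply/subsetP => h /imsetP[x Px ->].
by move: (subsetP sP x Px); case: x {Px} => a b; rewrite in_setX => /andP[].
Qed.

Lemma genU1H h (S : {set hT}) : h \in H -> S \subset H -> <<h |: S>> \subset H.
Proof. by move=> hH sS; rewrite gen_subG subUset sub1set hH. Qed.

Lemma setX_GG (A : {group F}) (B : {group hT}) :
  (setX A B == GG) = (A == setT :> {set F}) && (B == H :> {set hT}).
Proof.
apply/eqP/andP => [E|[/eqP -> /eqP ->] //]; split; apply/eqP/setP.
  move=> a; have := congr1 (fun S : {set gT} => (a, 1) \in S) E.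
  by rewrite /= !in_setX /= !group1 !andbT inE => ->.
move=> b; have := congr1 (fun S : {set gT} => (1, b) \in S) E.
by rewrite /= !in_setX /= !group1.
Qed.

Lemma termE (P : {set gT}) : P \subset GG ->
  (<<P>> == GG) = (<<p1 P>> == setT) && (<<p2 P>> == H).
Proof. by move=> sP; rewrite genX // setX_GG. Qed.

Definition near (P : {set gT}) :=
  [exists h, (h \in H) && (<<h |: p2 P>> == H)].

Lemma term_near (P : {set gT}) : P \subset GG -> <<P>> == GG -> near P.
Proof.
move=> sP; rewrite termE // => /andP[_ /eqP E]; apply/existsP; exists 1.
rewrite group1 /= eqEsubset genU1H ?group1 ?p2H //=.
by rewrite -{1}E genS // subsetUr.
Qed.

Lemma near_mono (P Q : {set gT}) : p2 P \subset p2 Q -> p2 Q \subset H -> near P -> near Q.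
Proof.
move=> sPQ sQ /existsP[h /andP[hH /eqP E]]; apply/existsP; exists h.
rewrite hH eqEsubset genU1H //= -{1}E genS //.
by rewrite setUS.
Qed.

Lemma near_U1 (P : {set gT}) (g : gT) : P \subset GG -> g \in GG -> near (g |: P) -> g.2 \in <<p2 P>> -> near P.
Proof.
move=> sP gG /existsP[h /andP[hH /eqP E]] g2; apply/existsP; exists h.
rewrite hH eqEsubset genU1H ?p2H //= -{1}E gen_subG p2U.
rewrite !subUset !sub1set mem_gen ?setU11 //= (subset_trans _ (subset_gen _)) ?subsetUr // andbT.
by rewrite (subsetP (genS (subsetUr [set h] (p2 P))) _ g2).
Qed.

Lemma term_near1 (P : {set gT}) (g : gT) : P \subset GG -> g \in GG -> <<g |: P>> == GG -> near P.
Proof.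
move=> sP gG; rewrite termE ?subUset ?sub1set ?gG // p2U => /andP[_ /eqP E].
apply/existsP; exists g.2; rewrite eqE /= E eqxx andbT.
by move: gG; case: g {E} => a b; rewrite in_setX => /andP[].
Qed.

Definition V0 (P : {set gT}) := p1 P \subset [1].

Lemma V0_nonterm (P : {set gT}) (g : gT) : P \subset GG -> g \in GG -> V0 P ->
  ~~ (<<g |: P>> == GG).
Proof.
move=> sP gG v0; rewrite termE ?subUset ?sub1set ?gG // p1U; apply/negP => /andP[/eqP E _].
have : <<g.1 |: p1 P>> \subset <[g.1]>.
  rewrite gen_subG subUset sub1set cycle_id /=.
  exact: subset_trans v0 (sub1G _).
rewrite E => /subset_leq_card; rewrite cardF -orderE.
have : #[g.1] %| 2 by rewrite order_dvdn sq1.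
by move/dvdn_leq => /(_ isT) h /leq_trans /(_ h).
Qed.

Lemma nonV0_U1 (P : {set gT}) (g : gT) : ~~ V0 P -> ~~ V0 (g |: P).
Proof.
apply: contra; rewrite /V0 p1U => h; exact: subset_trans (subsetUr _ _) h.
Qed.

Lemma exists_complete (S : {set F}) : ~~ (S \subset [1]) -> exists v, <<v |: S>> = setT.
Proof.
case/subsetPn => s sS; rewrite inE => s1.
have : ~~ ([set: F] \subset [set 1; s]).
  apply/negP => /subset_leq_card; rewrite cardF cards2.
  by case: (_ != _).
case/subsetPn => v _; rewrite !inE negb_or => /andP[v1 vs].
exists v; apply/eqP; rewrite eqEcard subsetT cardF.
set A := <<v |: S>>.
have h3 : 3 <= #|A|.
  have sub : v |: [set 1; s] \subset A.
    rewrite !subUset !sub1set group1 !mem_gen ?setU11 //= !inE sS orbT //.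
  apply: leq_trans (subset_leq_card sub).
  by rewrite cardsU1 cards2 !inE negb_or v1 vs eq_sym s1.
have d4 : #|A| %| 4 by rewrite -cardF cardSg ?subsetT.
have := @dvdn_leq _ 4 isT d4; move: h3 d4.
by move: #|A| => n; case: n => [|[|[|[|[|n]]]]].
Qed.

Lemma even_nontriv (A : {group F}) : A != 1 :> {set F} -> ~~ odd #|A|.
Proof.
rewrite -cardG_gt1 => h1.
have d4 : #|A| %| 4 by rewrite -cardF cardSg ?subsetT.
have := @dvdn_leq _ 4 isT d4; move: h1 d4.
by case: #|A| => [|[|[|[|[|n]]]]].
Qed.


Definition fv (P : {set gT}) : nat :=
  if <<P>> == GG then 0%N
  else if V0 P then (if odd #|P| then (if near P then 0%N else 2%N) else 1%N)
  else (if odd #|P| then 2%N else if near P then 1%N else 0%N).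

Lemma fv_odd1 (Q : {set gT}) : odd #|Q| -> fv Q != 1%N.
Proof. move=> oQ; rewrite /fv oQ. by case: (<<Q>> == _); case: (V0 Q); case: (near Q). Qed.

Lemma sub_opt (P : {set gT}) g : P \subset GG -> g \in GG :\: P -> g |: P \subset GG.
Proof. by move=> sP; rewrite in_setD => /andP[_ gG]; rewrite subUset sub1set gG sP. Qed.

Lemma odd_opt (P : {set gT}) g : g \in GG :\: P -> odd #|g |: P| = ~~ odd #|P|.
Proof. by rewrite in_setD cardsU1 => /andP[-> _]. Qed.

Lemma V0_opt (P : {set gT}) g : V0 (g |: P) = (g.1 == 1) && V0 P.
Proof. by rewrite /V0 p1U subUset sub1set inE. Qed.

Lemma term_opt (P : {set gT}) : P \subset GG -> ~~ (<<P>> == GG) -> ~~ V0 P -> near P ->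
  exists2 g, g \in GG :\: P & <<g |: P>> == GG.
Proof.
move=> sP nT nv /existsP[h /andP[hH /eqP Eh]].
have [v Ev] := @exists_complete (p1 P) nv.
have gG : (v, h) \in GG by rewrite in_setX hH andbT.
have T : <<(v, h) |: P>> == GG.
  by rewrite termE ?subUset ?sub1set ?gG // p1U p2U /= Ev Eh !eqxx.
exists (v, h) => //; rewrite inE gG andbT; apply: contraL T => vP.
by rewrite (setUidPr _) ?sub1set.
Qed.

Lemma W_opt (P : {set gT}) : P \subset GG -> ~~ V0 P -> odd #|P| ->
  exists2 g, g \in GG :\: P & (<<g |: P>> = <<P>>) /\ (near (g |: P) = near P).
Proof.
move=> sP nv oP.
have W := @genX P sP.
have n1 : <<p1 P>> != 1 :> {set F}.
  apply: contra nv => /eqP E; rewrite /V0 -E; exact: subset_gen.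
have eW : ~~ odd #|<<P>>| by rewrite W cardsX oddM negb_and even_nontriv.
have : ~~ (<<P>> \subset P).
  apply/negP => sWP; have E : <<P>> = P by apply/eqP; rewrite eqEsubset sWP subset_gen.
  by move: eW; rewrite E oP.
case/subsetPn => g gW gP.
have gG : g \in GG by apply: (subsetP _ g gW); rewrite gen_subG.
exists g; first by rewrite inE gP gG.
split.
  by apply/eqP; rewrite eqEsubset gen_subG subUset sub1set gW subset_gen genS // subsetUr.
apply/idP/idP; last by apply: near_mono; rewrite ?p2U ?subsetUr // -p2U p2H // subUset sub1set gG.
move=> nO; apply: (@near_U1 _ _ sP gG nO).
by move: gW; rewrite W; clear; case: g => a b; rewrite in_setX => /andP[].
Qed.

Lemma V0opt_ex (P : {set gT}) : P \subset GG -> V0 P -> ~~ (setX [1] H \subset P) ->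
  exists2 g, g \in GG :\: P & g.1 == 1.
Proof.
move=> sP v0 /subsetPn[g gX gP]; exists g; last by move: gX; case: g {gP} => a b; rewrite in_setX inE => /andP[].
rewrite inE gP /=; move: gX; case: g {gP} => a b; rewrite !in_setX => /andP[_ ->].
by rewrite andbT /Z2sq /= inE.
Qed.

Lemma v1_opt (P : {set gT}) : P \subset GG -> V0 P -> ~~ near P ->
  exists2 g, g \in GG :\: P & ~~ V0 (g |: P) /\ ~~ near (g |: P).
Proof.
move=> sP v0 nn.
have : ~~ ([set: F] \subset [1]).
  by apply/negP => /subset_leq_card; rewrite cardF cards1.
case/subsetPn => v _; rewrite inE => v1.
have gG : (v, 1) \in GG by rewrite in_setX group1 andbT /Z2sq /= inE.
exists (v, 1).
  rewrite inE gG andbT; apply/negP => vP.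
  by move: (subsetP v0 v (imset_f (fun x : gT => x.1) vP)); rewrite inE (negbTE v1).
split; first by rewrite V0_opt negb_and v1.
apply: contra nn => nO; apply: (@near_U1 _ _ sP gG nO); exact: group1.
Qed.


Lemma near1 (P : {set gT}) : P \subset GG -> H \subset p2 P -> near P.
Proof.
move=> sP sH; apply/existsP; exists 1; rewrite group1 eqEsubset genU1H ?group1 ?p2H //=.
apply: subset_trans sH _; apply: subset_trans (subsetUr _ _) (subset_gen _).
Qed.

Lemma V0_setX (P : {set gT}) : P \subset GG -> V0 P -> P \subset setX [1] H.
Proof.
move=> sP v0; apply/subsetP => -[a b] Pab; rewrite in_setX.
rewrite (subsetP v0) /=; last by apply/imsetP; exists (a, b).
by have := subsetP sP _ Pab; rewrite in_setX => /andP[].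
Qed.

Variables x y : hT.
Hypotheses (xH : x \in H) (yH : y \in H) (gxy : <<[set x; y]>> = H).

Lemma near_xy (S : {set hT}) (P : {set gT}) : P \subset GG -> x \in S ->
  S \subset p2 P -> near P.
Proof.
move=> sP xS sSP; apply/existsP; exists y; rewrite yH eqEsubset genU1H ?p2H //=.
rewrite -{1}gxy genS // subUset !sub1set setU11 andbT.
by rewrite setU1r // (subsetP sSP).
Qed.

Lemma pair_opt (P : {set gT}) : P \subset GG -> ~~ near P ->
  exists2 g, g \in GG :\: P &
    [/\ near (g |: P), ~~ (<<g |: P>> == GG) & V0 (g |: P) = V0 P].
Proof.
move=> sP nn.
have gG : ((1 : F), x) \in GG by rewrite in_setX xH andbT /Z2sq /= inE.
have gO : ((1 : F), x) \in GG :\: P.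
  rewrite in_setD gG andbT; apply: contra nn => xP.
  apply: (@near_xy [set x] P sP); first by rewrite inE.
  by rewrite sub1set; apply/imsetP; exists (1, x).
exists ((1 : F), x) => //.
split.
- apply: (@near_xy [set x] _ (@sub_opt P _ sP gO)); first by rewrite inE.
  by rewrite p2U sub1set setU11.
- by apply: contra nn; apply: term_near1.
- by rewrite V0_opt eqxx.
Qed.


Arguments sub_opt {P g}.
Arguments odd_opt {P g}.
Arguments V0_nonterm {P g}.
Arguments term_near1 {P g}.
Arguments term_near {P}.
Arguments nonV0_U1 {P}.
Arguments v1_opt {P}.
Arguments V0opt_ex {P}.
Arguments W_opt {P}.
Arguments term_opt {P}.
Arguments pair_opt {P}.
Arguments near_mono {P Q}.

Lemma core (P : {set gT}) : P \subset GG -> ~~ (<<P>> == GG) ->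
  fv P = if [exists g in GG :\: P, fv (g |: P) == 0%N]
         then (if [exists g in GG :\: P, fv (g |: P) == 1%N] then 2%N else 1%N)
         else 0%N.
Proof.
move=> sP nT.
have fvP : fv P = if V0 P then (if odd #|P| then (if near P then 0%N else 2%N) else 1%N)
  else (if odd #|P| then 2%N else if near P then 1%N else 0%N) by rewrite /fv (negbTE nT).
have noE1 : ~~ odd #|P| -> [exists g in GG :\: P, fv (g |: P) == 1%N] = false.
  move=> eP; apply/negbTE/existsP => -[g /andP[gO f1]].
  by move: f1; apply/negP; apply: fv_odd1; rewrite (odd_opt gO) eP.
rewrite fvP; case v0 : (V0 P); case oP : (odd #|P|).
-
  case nP : (near P).
    have -> // : [exists g in GG :\: P, fv (g |: P) == 0%N] = false.
    apply/negbTE/existsP => -[g /andP[gO f0]]; move: f0.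
    have gG : g \in GG by move: gO; rewrite in_setD => /andP[].
    have nO : near (g |: P) by apply: near_mono nP; rewrite ?p2U ?subsetUr // -p2U p2H // sub_opt.
    rewrite /fv (negbTE (V0_nonterm sP gG v0)) (odd_opt gO) oP nO /=.
    by case: (V0 _).
  have [g gO [nv nn]] := v1_opt sP v0 (negbT nP).
  have gG : g \in GG by move: gO; rewrite in_setD => /andP[].
  have -> : [exists g in GG :\: P, fv (g |: P) == 0%N].
    apply/existsP; exists g; rewrite gO /fv (odd_opt gO) oP (negbTE nv) (negbTE nn) /=.
    by case: ifP => // /(term_near (sub_opt sP gO)); rewrite (negbTE nn).
  have nsub : ~~ (setX [1] H \subset P).
    apply/negP => sX; move: nP; rewrite near1 // ; apply/subsetP => h hH.
    apply/imsetP; exists (1, h) => //; apply: (subsetP sX); rewrite in_setX inE eqxx hH.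
    by [].
  have [g' gO' g1] := V0opt_ex sP v0 nsub.
  have gG' : g' \in GG by move: gO'; rewrite in_setD => /andP[].
  have -> // : [exists g in GG :\: P, fv (g |: P) == 1%N].
  apply/existsP; exists g'; rewrite gO' /fv (negbTE (V0_nonterm sP gG' v0)) V0_opt g1 v0.
  by rewrite (odd_opt gO') oP.
-
  rewrite noE1 ?oP //.
  have -> // : [exists g in GG :\: P, fv (g |: P) == 0%N].
  case nP : (near P).
    have nsub : ~~ (setX [1] H \subset P).
      apply/negP => sX; have E : P = setX [1] H by apply/eqP; rewrite eqEsubset sX V0_setX.
      by move: oP; rewrite E cardsX cards1 mul1n oddH.
    have [g gO g1] := V0opt_ex sP v0 nsub.
    have gG : g \in GG by move: gO; rewrite in_setD => /andP[].
    have nO : near (g |: P) by apply: near_mono nP; rewrite ?p2U ?subsetUr // -p2U p2H // sub_opt.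
    apply/existsP; exists g; rewrite gO /fv (negbTE (V0_nonterm sP gG v0)) V0_opt g1 v0.
    by rewrite (odd_opt gO) oP nO.
  have [g gO [nO nt vO]] := pair_opt sP (negbT nP).
  apply/existsP; exists g; rewrite gO /fv (negbTE nt) vO v0.
  by rewrite (odd_opt gO) oP nO.
-
  have [g gO [Eg nE]] := W_opt sP (negbT v0) oP.
  have nt : ~~ (<<g |: P>> == GG) by rewrite Eg.
  have fg : fv (g |: P) = if near P then 1%N else 0%N.
    by rewrite /fv (negbTE nt) (negbTE (nonV0_U1 g (negbT v0))) (odd_opt gO) oP nE.
  case nP : (near P).
    have [g' gO' T'] := term_opt sP nT (negbT v0) nP.
    have -> : [exists g in GG :\: P, fv (g |: P) == 0%N].
      by apply/existsP; exists g'; rewrite gO' /fv T'.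
    have -> // : [exists g in GG :\: P, fv (g |: P) == 1%N].
    by apply/existsP; exists g; rewrite gO fg nP.
  have -> : [exists g in GG :\: P, fv (g |: P) == 0%N].
    by apply/existsP; exists g; rewrite gO fg nP.
  have [g' gO' [nO nt' vO]] := pair_opt sP (negbT nP).
  have -> // : [exists g in GG :\: P, fv (g |: P) == 1%N].
  apply/existsP; exists g'; rewrite gO' /fv (negbTE nt') vO v0.
  by rewrite (odd_opt gO') oP nO.
-
  rewrite noE1 ?oP //.
  case nP : (near P).
    have [g' gO' T'] := term_opt sP nT (negbT v0) nP.
    have -> // : [exists g in GG :\: P, fv (g |: P) == 0%N].
    by apply/existsP; exists g'; rewrite gO' /fv T'.
  have -> // : [exists g in GG :\: P, fv (g |: P) == 0%N] = false.
  apply/negbTE/existsP => -[g /andP[gO f0]]; move: f0.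
  have gG : g \in GG by move: gO; rewrite in_setD => /andP[].
  have nt : ~~ (<<g |: P>> == GG).
    by apply/negP => /(term_near1 sP gG); rewrite nP.
  by rewrite /fv (negbTE nt) (negbTE (nonV0_U1 g (negbT v0))) (odd_opt gO) oP.
Qed.


Lemma nim_fv n (P : {set gT}) : P \subset GG -> #|GG :\: P| < n ->
  minn (gen_nim_fuel (setX Z2sq H)%G n P) 2 = fv P.
Proof.
elim: n P => [|n IH] P sP //= hn.
case: ifP => ht.
  by rewrite /fv ht.
have cl g : g \in GG :\: P -> #|GG :\: (g |: P)| < n.
  move=> gO; rewrite -ltnS; apply: leq_trans hn; apply: proper_card.
  apply/properP; split; first by rewrite setDS // subsetUr.
  by exists g => //; rewrite in_setD setU11.
have E k : k <= 1 -> (k \in [seq gen_nim_fuel (setX Z2sq H)%G n (g |: P) | g in (setX Z2sq H)%G :\: P])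
   = [exists g in GG :\: P, fv (g |: P) == k].
  move=> k1; apply/mapP/existsP => [[g gin Ek]|[g /andP[gO /eqP fk]]].
    rewrite mem_enum in gin; exists g; rewrite gin /= -(IH _ (sub_opt sP gin) (cl g gin)) Ek.
    by move: k1; rewrite Ek => k1; apply/eqP/minn_idPl; exact: leq_trans k1 _.
  exists g; first by rewrite mem_enum.
  have := IH _ (sub_opt sP gO) (cl g gO); rewrite fk.
  rewrite /minn; case: ltnP => [_ ->|_ E] //.
  by move: k1; rewrite -E.
by rewrite mex_trunc !E // (core P sP (negbT ht)).
Qed.

End S.

Close Scope group_scope.
Theorem proposition4p11 (hT : finGroupType) (H : {group hT}) :
  odd #|H| -> dgen H = 2 -> GEN_nim (setX Z2sq H)%G = 1.
Proof.
move=> oddH; rewrite /dgen.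
case: arg_minnP => [|A /andP[sAH /eqP gA] _]; first by rewrite subxx genGid eqxx.
move=> /eqP /cards2P [x [y [_ Axy]]].
have xH : x \in H by rewrite (subsetP sAH) // Axy !inE eqxx.
have yH : y \in H by rewrite (subsetP sAH) // Axy !inE eqxx orbT.
have gxy : (<<[set x; y]>> = H)%g by rewrite -Axy.
rewrite /GEN_nim.
have := @nim_fv hT H oddH x y xH yH gxy #|(setX Z2sq H)%G|.+1 set0 (sub0set _).
rewrite setD0 ltnSn => /(_ isT).
have -> : fv hT H set0 = 1%N.
  rewrite /fv /V0.
  have -> : p1 hT set0 = set0 by rewrite /p1 imset0.
  rewrite sub0set cards0 /=.
  rewrite termE ?sub0set //.
  have ne : (1%g : {set F}) != setT.
    by apply/negP => /eqP E; move: cardF; rewrite -E cards1.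
  by rewrite /p1 imset0 gen0 (negbTE ne).
rewrite /minn; case: ltnP => [_ -> //|_ E].
by [].
Qed.
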